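(* Let $N\ge 2$, $S\ge 1$, $d\ge 1$ be integers. If $d\ge N-1$, then for every next-token distribution $\pi$ on $[N]^S$ we have $d_{KL}(\pi,\mathcal{L}(N,S,d))=0$. Conversely, if $d<N-1$, there exists a next-token distribution $\pi$ on $[N]^S$ such that $d_{KL}(\pi,\mathcal{L}(N,S,d))>0$.
   Context: $[N]=\{1,\dots,N\}$. A next-token distribution $\pi$ consists of a prior probability distribution on $[N]^S$ together with, for each $t_{1:S}\in[N]^S$, a conditional probability distribution $\pi_{t_{1:S}}=\pi(\cdot\mid t_{1:S})$ on $[N]$. For $f:[N]^S\to\mathbb{R}^N$, $d_{KL}(\pi,f):=\mathbb{E}_{t_{1:S}\sim\pi}\big[\mathrm{KL}(\pi_{t_{1:S}}\,\|\,\mathrm{Softmax}(f(t_{1:S})))\big]$. The set of sequence encoders is $\mathcal{L}(N,S,d):=\{f_{W,E}: W\in\mathbb{R}^{N\times d},\ E:[N]^S\to\mathbb{R}^d\}$ with $f_{W,E}(t_{1:S})=W E(t_{1:S})$, and $d_{KL}(\pi,\mathcal{L}(N,S,d)):=\inf_{f\in\mathcal{L}(N,S,d)}d_{KL}(\pi,f)$. *)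

(* Defs.v *)
From HB Require Import structures.
From mathcomp Require Import all_boot all_order all_algebra.
From mathcomp Require Import all_classical all_reals all_analysis.
Set Implicit Arguments. Unset Strict Implicit. Unset Printing Implicit Defensive.
Import Order.TTheory GRing.Theory Num.Theory.
Local Open Scope ring_scope.
Local Open Scope classical_set_scope.

(* [N] is represented by 'I_N (0-indexed), [N]^S by S.-tuple 'I_N. *)
Definition seqs (N S : nat) := (S.-tuple 'I_N)%type.

Definition is_distr {R : realType} {T : finType} (p : T -> R) : Prop :=
  (forall x, 0 <= p x) /\ \sum_(x : T) p x = 1.

Definition is_next_token_distr {R : realType} (N S : nat)
  (prior : seqs N S -> R) (cond : seqs N S -> 'I_N -> R) : Prop :=
  is_distr prior /\ forall t, is_distr (cond t).

Definition softmax {R : realType} {N : nat} (v : 'cV[R]_N) : 'I_N -> R :=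
  fun i => expR (v i 0) / \sum_(j < N) expR (v j 0).

(* KL(p || q) = sum_i p_i log(p_i / q_i), with 0 log 0 = 0
   (automatic since 0 * _ = 0). *)
Definition KL {R : realType} {N : nat} (p q : 'I_N -> R) : R :=
  \sum_(i < N) p i * ln (p i / q i).

Definition dKL {R : realType} (N S : nat)
  (prior : seqs N S -> R) (cond : seqs N S -> 'I_N -> R)
  (f : seqs N S -> 'cV[R]_N) : R :=
  \sum_(t : seqs N S) prior t * KL (cond t) (softmax (f t)).

Definition encoders {R : realType} (N S d : nat) : set (seqs N S -> 'cV[R]_N) :=
  [set f | exists (W : 'M[R]_(N, d)) (E : seqs N S -> 'cV[R]_d),
           f = fun t => W *m E t].

Definition dKL_L {R : realType} (N S d : nat)
  (prior : seqs N S -> R) (cond : seqs N S -> 'I_N -> R) : R :=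
  inf [set dKL prior cond f | f in @encoders R N S d].

(* Main.v *)
Require Import Defs.
From HB Require Import structures.
From mathcomp Require Import all_boot all_order all_algebra.
From mathcomp Require Import all_classical all_reals all_analysis.
From mathcomp Require Import ring lra zify.
Import Order.TTheory GRing.Theory Num.Theory.
Local Open Scope ring_scope.

Section Helpers.
Set Implicit Arguments. Unset Strict Implicit. Unset Printing Implicit Defensive.
Local Open Scope classical_set_scope.
Variable R : realType.

Lemma Z_gt0 (N : nat) (v : 'cV[R]_N) (i0 : 'I_N) : 0 < \sum_(j < N) expR (v j 0).
Proof.
rewrite (bigD1 i0) //=; apply: ltr_pwDl; first exact: expR_gt0.
by apply: sumr_ge0 => j _; exact: ltW (expR_gt0 _).
Qed.

Lemma softmax_gt0 (N : nat) (v : 'cV[R]_N) i : 0 < softmax v i.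
Proof. by apply: divr_gt0; [exact: expR_gt0 | exact: Z_gt0 v i]. Qed.

Lemma softmax_sum (N : nat) (v : 'cV[R]_N) (i0 : 'I_N) : \sum_i softmax v i = 1.
Proof.
by rewrite /softmax -mulr_suml mulfV // gt_eqF // (Z_gt0 v i0).
Qed.

Lemma ln_softmax (N : nat) (v : 'cV[R]_N) i :
  ln (softmax v i) = v i 0 - ln (\sum_(j < N) expR (v j 0)).
Proof.
by rewrite /softmax ln_div ?expRK // posrE ?expR_gt0 ?(Z_gt0 v i).
Qed.

Lemma term_ge0 (a b : R) : 0 <= a -> 0 < b -> 0 <= a * ln (a / b) + b - a.
Proof.
rewrite le0r => /orP [/eqP -> | ha] hb; first by rewrite mul0r add0r subr0 ltW.
have h : ln (b / a) <= b / a - 1.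
  have e1 : 1 + (b / a - 1) = b / a by rewrite addrC subrK.
  have := @le_ln1Dx R (b / a - 1); rewrite e1; apply.
  have := divr_gt0 hb ha; lra.
have e : ln (a / b) = - ln (b / a).
  by rewrite -lnV ?posrE ?divr_gt0 // invf_div.
rewrite e mulrN.
have : a * ln (b / a) <= a * (b / a - 1) by rewrite ler_pM2l.
rewrite mulrBr mulr1 mulrCA mulfV ?gt_eqF // mulr1.
lra.
Qed.


Lemma ln_le_sub1 (x : R) : 0 < x -> ln x <= x - 1.
Proof.
move=> hx.
have e1 : 1 + (x - 1) = x by rewrite addrC subrK.
have := @le_ln1Dx R (x - 1); rewrite e1; apply; lra.
Qed.

Lemma term_close (a b : R) : 0 < a -> 0 < b ->
  a * ln (a / b) + b - a < a / 4 -> `|ln b - ln a| <= 3.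
Proof.
move=> ha hb hlt.
set r := b / a.
have hr : 0 < r by rewrite divr_gt0.
set s := Num.sqrt r.
have hs : 0 < s by rewrite sqrtr_gt0.
have hsr : s * s = r by rewrite -expr2 sqr_sqrtr // ltW.
have hlnr : ln r = ln s + ln s by rewrite -hsr lnM ?posrE.
have hls := ln_le_sub1 hs.
have e : ln (a / b) = - ln r by rewrite -lnV ?posrE // invf_div.
have eb : b = a * r by rewrite /r mulrCA mulfV ?gt_eqF // mulr1.
have h2 : a * ((s - 1) ^+ 2) < a * (1 / 4).
  rewrite mul1r; apply: le_lt_trans hlt.
  rewrite e eb.
  have : (s - 1) ^+ 2 <= r - 1 - ln r.
    rewrite hlnr -hsr; nra.
  move=> h; have := ler_wpM2l (ltW ha) h; lra.
rewrite ltr_pM2l // in h2.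
have hr1 : 1/4 < r by rewrite -hsr; nra.
have hr2 : r < 9/4 by rewrite -hsr; nra.
have -> : ln b - ln a = ln r by rewrite /r ln_div ?posrE.
rewrite ler_norml; apply/andP; split.
  have hri : 0 < r^-1 by rewrite invr_gt0.
  have := ln_le_sub1 hri; rewrite lnV ?posrE //.
  have : r * r^-1 = 1 by rewrite mulfV ?gt_eqF.
  move=> h1 h3.
  have : r^-1 < 4 by nra.
  lra.
have := ln_le_sub1 hr; lra.
Qed.


Lemma dep_exists (d : nat) (E : 'I_d.+1 -> 'cV[R]_d) :
  exists2 lam : 'I_d.+1 -> R, (exists j, lam j != 0) &
    forall k, \sum_j lam j * E j k 0 = 0.
Proof.
pose A : 'M[R]_(d.+1, d) := \matrix_(j, k) E j k 0.
have nf : ~~ row_free A by rewrite -row_leq_rank -ltnNge ltnS rank_leq_col.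
move: nf; rewrite -kermx_eq0 => /rowV0Pn [v /sub_kermxP vA v0].
exists (fun j => v 0 j); first by apply/rV0Pn.
move=> k; transitivity ((v *m A) 0 k); last by rewrite vA mxE.
by rewrite !mxE; apply: eq_bigr => j _; rewrite mxE.
Qed.

Lemma main_contra (N d : nat) (W : 'M[R]_(N, d)) (E : 'I_d.+1 -> 'cV[R]_d)
  (P : 'I_d.+1 -> 'cV[R]_N) (last : 'I_N) (wid : 'I_d.+1 -> 'I_N) (D : R) :
  (forall j, val (wid j) = val j) -> (forall j, wid j != last) ->
  (forall j i, P j i 0 = if i == wid j then D else 0) ->
  (forall j i, `| ln (softmax (W *m E j) i) - ln (softmax (P j) i) | <= 3) ->
  D <= 6 * (d.+1)%:R.
Proof.
move=> hwid hlast hP hclose.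
have [lam [j0 hj0] hlam] := dep_exists E.
pose y j i := ln (softmax (W *m E j) i) - ln (softmax (P j) i)
             - (ln (softmax (W *m E j) last) - ln (softmax (P j) last)).
have hy : forall j i, `|y j i| <= 6.
  move=> j i; rewrite /y; apply: (le_trans (ler_normB _ _)).
  have := hclose j i; have := hclose j last; lra.
have hyE : forall j i, y j i = ((W *m E j) i 0 - (W *m E j) last 0)
                              - (P j i 0 - P j last 0).
  move=> j i; rewrite /y !ln_softmax; lra.
have hWE : forall i, \sum_j lam j * (W *m E j) i 0 = 0.
  move=> i.
  under eq_bigr => j _ do rewrite mxE mulr_sumr.
  rewrite exchange_big /= big1 // => k _.
  under eq_bigr => j _ do rewrite mulrCA.
  by rewrite -mulr_sumr hlam mulr0.
have winj : injective wid.
  by move=> a b h; apply: val_inj; rewrite -hwid h hwid.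
have key : forall j', lam j' * D = - \sum_j lam j * y j (wid j').
  move=> j'.
  have hl : forall j, (last == wid j) = false.
    by move=> j; rewrite eq_sym; exact: negbTE (hlast j).
  under eq_bigr => j _ do rewrite hyE !hP hl subr0.
  rewrite -sumrN.
  under eq_bigr => j _ do rewrite mulrBr mulrBr opprB.
  rewrite sumrB sumrB !hWE subrr subr0.
  rewrite (bigD1 j') //= eqxx big1 ?addr0 // => j hj.
  by rewrite (inj_eq winj) eq_sym (negbTE hj) mulr0.
have hb : forall j', `|lam j'| * D <= 6 * \sum_j `|lam j|.
  move=> j'; apply: (le_trans (y := `|lam j' * D|)).
    by rewrite normrM ler_wpM2l // ler_norm.
  rewrite key normrN (le_trans (ler_norm_sum _ _ _)) //.
  rewrite mulr_sumr; apply: ler_sum => j _.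
  by rewrite normrM mulrC ler_wpM2r // hy.
have hs : 0 < \sum_j `|lam j|.
  rewrite (bigD1 j0) //=; apply: ltr_pwDl; first by rewrite normr_gt0.
  by apply: sumr_ge0 => j _.
have : (\sum_j `|lam j|) * D <= (\sum_(j : 'I_d.+1) 6 * \sum_j `|lam j|).
  by rewrite mulr_suml; apply: ler_sum => j _; exact: hb.
rewrite sumr_const card_ord.
set s := \sum_j `|lam j| in hs *.
have -> : 6 * s *+ d.+1 = s * (6 * d.+1%:R) by rewrite -mulr_natr; ring.
by rewrite ler_pM2l.
Qed.


Lemma KL_eq (N : nat) (p q : 'I_N -> R) :
  \sum_i p i = 1 -> \sum_i q i = 1 ->
  KL p q = \sum_i (p i * ln (p i / q i) + q i - p i).
Proof.
move=> hp hq; rewrite /KL.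
under [RHS]eq_bigr => i _ do rewrite -addrA.
by rewrite big_split /= sumrB hp hq subrr addr0.
Qed.

Lemma KL_ge0 (N : nat) (p q : 'I_N -> R) :
  (forall i, 0 <= p i) -> (forall i, 0 < q i) ->
  \sum_i p i = 1 -> \sum_i q i = 1 -> 0 <= KL p q.
Proof.
move=> p0 q0 hp hq; rewrite (KL_eq hp hq).
by apply: sumr_ge0 => i _; apply: term_ge0.
Qed.

Lemma KL_term_le (N : nat) (p q : 'I_N -> R) i :
  (forall i, 0 <= p i) -> (forall i, 0 < q i) ->
  \sum_i p i = 1 -> \sum_i q i = 1 ->
  p i * ln (p i / q i) + q i - p i <= KL p q.
Proof.
move=> p0 q0 hp hq; rewrite (KL_eq hp hq) (bigD1 i) //= lerDl.
by apply: sumr_ge0 => j _; apply: term_ge0.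
Qed.

Lemma KL_le (N : nat) (p q : 'I_N -> R) (del : R) :
  (forall i, 0 <= p i) -> (forall i, 0 < q i) -> \sum_i p i = 1 ->
  (forall i, expR (- del) * p i <= q i) -> KL p q <= del.
Proof.
move=> p0 q0 hp hq; rewrite /KL.
have -> : del = \sum_i p i * del by rewrite -mulr_suml hp mul1r.
apply: ler_sum => i _.
have := p0 i; rewrite le0r => /orP [/eqP -> | hpi]; first by rewrite !mul0r.
rewrite ler_pM2l //.
rewrite -[X in _ <= X]expRK ler_ln ?posrE ?divr_gt0 ?expR_gt0 //.
rewrite ler_pdivrMr //.
have e : expR del * expR (- del) = 1 by rewrite -expRD subrr expR0.
have := ler_wpM2l (ltW (expR_gt0 del)) (hq i).
by rewrite mulrA e mul1r.
Qed.

Lemma softmax_eq (N : nat) (v : 'cV[R]_N) (q : 'I_N -> R) (c : R) :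
  0 < c -> \sum_i q i = 1 -> (forall i, expR (v i 0) = c * q i) ->
  forall i, softmax v i = q i.
Proof.
move=> c0 hq hv i; rewrite /softmax.
under eq_bigr => j _ do rewrite hv.
by rewrite -mulr_sumr hq mulr1 hv mulrC mulKf ?gt_eqF.
Qed.

Lemma softmax_lb (N : nat) (v : 'cV[R]_N) (D : R) i :
  (forall j, 0 <= v j 0 <= D) -> (N%:R * expR D)^-1 <= softmax v i.
Proof.
move=> hv; rewrite /softmax.
have Z0 := Z_gt0 v i.
have hZ : \sum_(j < N) expR (v j 0) <= N%:R * expR D.
  apply: le_trans (_ : \sum_(j < N) expR D <= _).
    by apply: ler_sum => j _; rewrite ler_expR; case/andP: (hv j).
  by rewrite sumr_const card_ord mulr_natl.
have h1 : 1 <= expR (v i 0).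
  have := expR_ge1Dx (v i 0); case/andP: (hv i) => h _; lra.
apply: le_trans (_ : (\sum_(j < N) expR (v j 0))^-1 <= _).
  by rewrite lef_pV2 ?posrE // (lt_le_trans Z0 hZ).
rewrite -[X in X <= _]mul1r ler_wpM2r // invr_ge0 ltW //.
Qed.


Lemma proj_eq (N d : nat) (v : 'cV[R]_N) (i : 'I_N) :
  let W := (\matrix_(i, k) (if val i == val k then 1 else 0) : 'M[R]_(N, d)) in
  (W *m (W^T *m v)) i 0 = if (val i < d)%N then v i 0 else 0.
Proof.
move=> W; rewrite mxE.
case: ifP => hi.
  rewrite (bigD1 (Ordinal hi)) //= big1 ?addr0; last first.
    move=> k hk; rewrite /W mxE.
    case: eqP => [h|]; last by rewrite mul0r.
    by exfalso; move/eqP: hk; apply; apply: val_inj; rewrite /= h.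
  rewrite /W mxE eqxx mul1r mxE (bigD1 i) //= big1 ?addr0.
    by rewrite !mxE eqxx mul1r.
  move=> i' hi'; rewrite !mxE /=.
  case: eqP => [h|]; last by rewrite mul0r.
  by exfalso; move/eqP: hi'; apply; apply: val_inj; rewrite /= h.
rewrite big1 // => k _; rewrite /W mxE.
case: eqP => [h|]; last by rewrite mul0r.
by exfalso; move: hi; rewrite h ltn_ord.
Qed.

Lemma part1 (N S d : nat) : (2 <= N)%N -> (N - 1 <= d)%N ->
  forall (prior : seqs N S -> R) (cond : seqs N S -> 'I_N -> R),
    is_next_token_distr prior cond -> dKL_L d prior cond = 0.
Proof.
move=> hN hd prior cond [[pr0 prs] hc].
have hN0 : (0 < N)%N by apply: leq_trans hN.
pose i0 : 'I_N := Ordinal hN0.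
have hNl : (N.-1 < N)%N by rewrite prednK.
pose il : 'I_N := Ordinal hNl.
have pos : forall f, 0 <= dKL prior cond f.
  move=> f; apply: sumr_ge0 => t _; apply: mulr_ge0 => //.
  apply: KL_ge0; first exact: (hc t).1.
  - by move=> i; apply: softmax_gt0.
  - exact: (hc t).2.
  - exact: softmax_sum i0.
have small : forall del : R, 0 < del ->
    exists2 f, @encoders R N S d f & dKL prior cond f <= del.
  move=> del hdel.
  pose a := expR (- del).
  have ha1 : 1 - a > 0 by rewrite subr_gt0 expR_lt1 oppr_lt0.
  have hNr : 0 < (N%:R : R) by rewrite ltr0n.
  pose q t i := a * cond t i + (1 - a) / N%:R.
  have hq0 : forall t i, 0 < q t i.
    move=> t i; rewrite /q; apply: ltr_wpDl.
      by apply: mulr_ge0; [exact: ltW (expR_gt0 _) | exact: (hc t).1].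
    by rewrite divr_gt0.
  have hqs : forall t, \sum_i q t i = 1.
    move=> t; rewrite /q big_split /= -mulr_sumr (hc t).2 sumr_const card_ord.
    by rewrite -[(_ / _) *+ _]mulr_natr divfK ?gt_eqF // mulr1 addrC subrK.
  pose v t : 'cV[R]_N := \col_i (ln (q t i) - ln (q t il)).
  pose W := (\matrix_(i, k) (if val i == val k then 1 else 0) : 'M[R]_(N, d)).
  exists (fun t => W *m (W^T *m v t)); first by exists W, (fun t => W^T *m v t).
  have hsm : forall t, softmax (W *m (W^T *m v t)) = q t.
    move=> t; apply/funext => i.
    apply: (softmax_eq (c := (q t il)^-1)); first by rewrite invr_gt0.
      exact: hqs.
    move=> j; rewrite proj_eq.
    case: ifP => hj.
      by rewrite mxE expRB !lnK ?posrE // mulrC.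
    have -> : j = il.
      apply: val_inj => /=; have := ltn_ord j; move/negbT: hj; rewrite -leqNgt; move: hd hN; case: j => x hx /=; clear; lia.
    by rewrite mulVf ?gt_eqF // expR0.
  rewrite /dKL.
  have -> : del = \sum_t prior t * del by rewrite -mulr_suml prs mul1r.
  apply: ler_sum => t _; apply: ler_wpM2l => //.
  rewrite hsm; apply: KL_le.
  - exact: (hc t).1.
  - exact: hq0.
  - exact: (hc t).2.
  - move=> i; rewrite /q lerDl; apply: divr_ge0; [exact: ltW | exact: ltW].
have ne : [set dKL prior cond f | f in @encoders R N S d] !=set0.
  have [f hf _] := small 1 ltr01.
  by exists (dKL prior cond f), f.
apply/le_anti/andP; split; last first.
  apply: lb_le_inf => // y [f _ <-]; exact: pos.
have hinf : forall del : R, 0 < del -> dKL_L d prior cond <= del.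
  move=> del hdel; have [f hf hfd] := small del hdel.
  apply: le_trans hfd; apply: (ge_inf (E := [set dKL prior cond f | f in @encoders R N S d])).
    by exists 0 => y [g _ <-]; exact: pos.
  by exists f.
rewrite leNgt; apply/negP => h.
have := hinf _ (divr_gt0 h (ltr0Sn R 1)); lra.
Qed.


Lemma head_nseq (S : nat) (N : nat) (x : 'I_N) : (0 < S)%N ->
  head 0%N [seq val y | y <- nseq S x] = val x.
Proof. by case: S. Qed.

Lemma part2 (N S d : nat) : (2 <= N)%N -> (1 <= S)%N -> (d < N - 1)%N ->
  exists (prior : seqs N S -> R) (cond : seqs N S -> 'I_N -> R),
    is_next_token_distr prior cond /\ 0 < dKL_L d prior cond.
Proof.
move=> hN hS hd.
have hN0 : (0 < N)%N by apply: leq_trans hN.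
pose i0 : 'I_N := Ordinal hN0.
have hNl : (N.-1 < N)%N by rewrite prednK.
pose il : 'I_N := Ordinal hNl.
have hdN : (d.+1 <= N)%N by move: hd hN; clear; lia.
pose D : R := 6 * (d.+1)%:R + 1.
have hD0 : 0 <= D by rewrite /D addr_ge0 // mulr_ge0 // ler0n.
pose hdt (t : seqs N S) := head 0%N [seq val y | y <- t].
pose V (t : seqs N S) : 'cV[R]_N := \col_i (if val i == hdt t then D else 0).
have hV : forall t j, 0 <= V t j 0 <= D.
  by move=> t j; rewrite mxE; case: ifP => _; rewrite ?lexx ?hD0.
pose cond t := softmax (V t).
pose n := #|{: seqs N S}|.
pose prior (t : seqs N S) := (n%:R : R)^-1.
pose tj (j : 'I_d.+1) : seqs N S := nseq_tuple S (widen_ord hdN j).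
have hn : (0 < n)%N by apply/card_gt0P; exists (tj ord0).
have hnr : 0 < (n%:R : R) by rewrite ltr0n.
pose c : R := (N%:R * expR D)^-1.
have hc0 : 0 < c by rewrite invr_gt0 mulr_gt0 ?expR_gt0 // ltr0n.
have hcond : forall t i, c <= cond t i by move=> t i; apply: softmax_lb.
exists prior, cond; split.
  split.
    split; first by move=> t; rewrite /prior invr_ge0 ltW.
    rewrite /prior sumr_const -/n -[(_^-1) *+ _]mulr_natr mulVf //.
    by rewrite gt_eqF.
  move=> t; split; first by move=> i; apply: ltW; apply: softmax_gt0.
  exact: softmax_sum i0.
have ne : [set dKL prior cond f | f in @encoders R N S d] !=set0.
  exists (dKL prior cond (fun t => (0 : 'M[R]_(N, d)) *m (0 : 'cV[R]_d))).
  by exists (fun t => (0 : 'M[R]_(N, d)) *m (0 : 'cV[R]_d)) => //; exists 0, (fun _ => 0).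
have hlb : 0 < c / 4 / n%:R by rewrite !divr_gt0.
apply: (lt_le_trans hlb); apply: lb_le_inf => // y [f [W [E ->]] <-].
rewrite leNgt; apply/negP => hlt.
have hK : forall j, KL (cond (tj j)) (softmax (W *m E (tj j))) < c / 4.
  move=> j.
  have : prior (tj j) * KL (cond (tj j)) (softmax (W *m E (tj j)))
         <= dKL prior cond (fun t => W *m E t).
    rewrite /dKL (bigD1 (tj j)) //= lerDl; apply: sumr_ge0 => t _.
    apply: mulr_ge0; first by rewrite /prior invr_ge0 ltW.
    apply: KL_ge0.
    - by move=> i; apply: ltW; apply: softmax_gt0.
    - by move=> i; apply: softmax_gt0.
    - exact: softmax_sum i0.
    - exact: softmax_sum i0.
  move=> h; have h2 := le_lt_trans h hlt.
  rewrite /prior mulrC ltr_pM2r ?invr_gt0 // in h2.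
have hdl : (d < N.-1)%N by move: hd; clear; lia.
have hD : D <= 6 * (d.+1)%:R.
  apply: (@main_contra N d W (fun j => E (tj j)) (fun j => V (tj j)) il
    (widen_ord hdN) D).
  - by [].
  - move=> j; apply/eqP => h; have := congr1 val h => /= hj.
    have := ltn_ord j; rewrite hj; move: hdl; clear; lia.
  - move=> j i; rewrite mxE /hdt /tj /= head_nseq //.
  - move=> j i.
    have ha := softmax_gt0 (V (tj j)) i.
    have hb := softmax_gt0 (W *m E (tj j)) i.
    apply: term_close => //.
    apply: (le_lt_trans (KL_term_le i _ _ _ _)).
    + by move=> k; apply: ltW; apply: softmax_gt0.
    + by move=> k; apply: softmax_gt0.
    + exact: softmax_sum i0.
    + exact: softmax_sum i0.
    apply: (lt_le_trans (hK j)).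
    have := hcond (tj j) i; rewrite /cond; lra.
move: hD; rewrite /D; lra.
Qed.

End Helpers.

Theorem proposition2 (R : realType) (N S d : nat) :
  (2 <= N)%N -> (1 <= S)%N -> (1 <= d)%N ->
  ((N - 1 <= d)%N ->
     forall (prior : seqs N S -> R) (cond : seqs N S -> 'I_N -> R),
       is_next_token_distr prior cond -> dKL_L d prior cond = 0)
  /\
  ((d < N - 1)%N ->
     exists (prior : seqs N S -> R) (cond : seqs N S -> 'I_N -> R),
       is_next_token_distr prior cond /\ 0 < dKL_L d prior cond).
Proof.
move=> hN hS hd1; split.
  by move=> hd; apply: part1.
by move=> hd; apply: part2.
Qed.
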